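(* Let $(\omega_n)_{n}$ be i.i.d. random variables whose common law has support $[0,1]$, and for $E\in\mathbb{R}$ let $$T_n=\begin{pmatrix}(\omega_n-E)(\omega_n+E)+1&\omega_n-E\\\omega_n+E&1\end{pmatrix}\in SL_2(\mathbb{R}).$$ Let $G$ be the closed subgroup of $SL_2(\mathbb{R})$ generated by the support of the common law of the $T_n$. If $E\in[-3,3]$, then $G$ is not compact and, for every direction $\tilde{x}$ in the projective line $\mathbb{P}(\mathbb{R}^2)$, the orbit $\{g\tilde{x}:g\in G\}$ has at least three elements. *)

(* Defs.v *)
From HB Require Import structures.
From mathcomp Require Import all_boot all_order all_algebra.
From mathcomp Require Import all_classical all_reals all_analysis.
Set Implicit Arguments. Unset Strict Implicit. Unset Printing Implicit Defensive.
Import Order.TTheory GRing.Theory Num.Theory.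
Import numFieldNormedType.Exports.
Local Open Scope classical_set_scope.
Local Open Scope ring_scope.

Definition SL2 (R : realType) : set 'M[R]_2 := [set M | \det M = 1].

Definition closed_subgroup_SL2 (R : realType) (H : set 'M[R]_2) : Prop :=
  [/\ H `<=` @SL2 R, H 1%:M,
      (forall a b, H a -> H b -> H (a *m b)),
      (forall a, H a -> H (invmx a)) & closed H].

Definition gen_closed_subgroup (R : realType) (S : set 'M[R]_2) : set 'M[R]_2 :=
  \bigcap_(H in [set H | closed_subgroup_SL2 H /\ S `<=` H]) H.

Definition Tmat (R : realType) (E w : R) : 'M[R]_2 :=
  \matrix_(i < 2, j < 2)
    if (i == 0 :> nat) then
      (if (j == 0 :> nat) then (w - E) * (w + E) + 1 else w - E)
    else
      (if (j == 0 :> nat) then w + E else 1).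

Definition support_R (R : realType) (mu : probability (measurableTypeR R) R)
  : set R :=
  [set x | forall U : set R, open U -> U x -> (0 < mu U)%E].

(* topological support of the law of T(omega), omega ~ mu, i.e. of the
   pushforward of mu by f : R -> 'M_2 *)
Definition support_law (R : realType) (mu : probability (measurableTypeR R) R)
  (f : R -> 'M[R]_2) : set 'M[R]_2 :=
  [set M | forall U : set 'M[R]_2, open U -> U M -> (0 < mu (f @^-1` U))%E].

(* equality in the projective line P(R^2) of the directions of u and v *)
Definition same_direction (R : realType) (u v : 'cV[R]_2) : Prop :=
  exists c : R, c != 0 /\ u = c *: v.

(* Main.v *)
Require Import Defs.
From HB Require Import structures.
From mathcomp Require Import all_boot all_order all_algebra.
From mathcomp Require Import all_classical all_reals all_analysis.
From mathcomp Require Import ring lra.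
Import Order.TTheory GRing.Theory Num.Theory.
Import numFieldNormedType.Exports.
Local Open Scope classical_set_scope.
Local Open Scope ring_scope.
Set Implicit Arguments. Unset Strict Implicit.

Lemma Tmat_cont (R : realType) (E : R) : continuous (Tmat E).
Proof.
move=> w A [P HP sPA].
have H : forall ij : 'I_2 * 'I_2,
   \forall v \near w, P ij.1 ij.2 (Tmat E v ij.1 ij.2).
  move=> [i j] /=.
  have : {for w, continuous (fun v => Tmat E v i j)}.
    rewrite /Tmat.
    under [X in {for w, continuous X}]funext do rewrite mxE.
    case: i => [[|[|//]] ?]; case: j => [[|[|//]] ?] /=.
    - apply: cvgD; last exact: cvg_cst.
      by apply: cvgM; [apply: cvgB|apply: cvgD] => //; exact: cvg_cst.
    - by apply: cvgB => //; exact: cvg_cst.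
    - by apply: cvgD => //; exact: cvg_cst.
    - exact: cvg_cst.
  move=> c; apply: c.
  by have := HP i j.
exact: (filterS (fun v (Hv : forall ij : _ * _, _) => sPA (Tmat E v) (fun i j => Hv (i,j))) (filter_forall _ H)).
Qed.

Section G.
Variables (R : realType) (mu : probability (measurableTypeR R) R) (E : R).
Let G := gen_closed_subgroup (support_law mu (Tmat E)).

Lemma Gmul a b : G a -> G b -> G (a *m b).
Proof. move=> Ga Gb H hH; have := hH; move=> [[? ? HM ? ?] HS]; apply: HM; [exact: Ga|exact: Gb]. Qed.
Lemma Ginv a : G a -> G (invmx a).
Proof. move=> Ga H hH; have := hH; move=> [[? ? ? HI ?] HS]; apply: HI; exact: Ga. Qed.
Lemma G1 : G 1%:M.
Proof. by move=> H [[? H1 ? ? ?] HS]. Qed.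
Lemma GT w : support_R mu = [set x : R | 0 <= x <= 1] -> 0 <= w <= 1 -> G (Tmat E w).
Proof.
move=> hs hw H [_ HS]; apply: HS => U oU Uw.
have : support_R mu w by rewrite hs.
apply => //.
apply: open_comp => // x _; exact: Tmat_cont.
Qed.
End G.

Definition mk2 (R : ringType) (a b c d : R) : 'M[R]_2 :=
  \matrix_(i < 2, j < 2)
    if (i == 0 :> nat) then (if (j == 0 :> nat) then a else b)
    else (if (j == 0 :> nat) then c else d).

Lemma mk2_eq (R : ringType) (M : 'M[R]_2) :
  M = mk2 (M 0 0) (M 0 1) (M 1 0) (M 1 1).
Proof.
apply/matrixP => i j; rewrite mxE.
case: i => [[|[|//]] ?]; case: j => [[|[|//]] ?] /=; congr (M _ _); exact: val_inj.
Qed.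

Lemma mk2_mul (R : ringType) (a b c d a' b' c' d' : R) :
  mk2 a b c d *m mk2 a' b' c' d' =
  mk2 (a*a' + b*c') (a*b'+b*d') (c*a'+d*c') (c*b'+d*d').
Proof.
apply/matrixP => i j; rewrite !mxE !big_ord_recr big_ord0 /= add0r !mxE /=.
by case: i => [[|[|//]] ?]; case: j => [[|[|//]] ?] /=.
Qed.

Lemma Tmk2 (R : realType) (E w : R) :
  Tmat E w = mk2 ((w - E) * (w + E) + 1) (w - E) (w + E) 1.
Proof. by []. Qed.

Lemma one_mk2 (R : ringType) : (1%:M : 'M[R]_2) = mk2 1 0 0 1.
Proof.
apply/matrixP => i j; rewrite !mxE.
by case: i => [[|[|//]] ?]; case: j => [[|[|//]] ?] /=.
Qed.

Lemma mk2_sub (R : ringType) (a b c d a' b' c' d' : R) :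
  mk2 a b c d - mk2 a' b' c' d' = mk2 (a-a') (b-b') (c-c') (d-d').
Proof.
apply/matrixP => i j; rewrite !mxE.
by case: i => [[|[|//]] ?]; case: j => [[|[|//]] ?] /=.
Qed.

Lemma mk2_scale (R : ringType) (k a b c d : R) :
  k *: mk2 a b c d = mk2 (k*a) (k*b) (k*c) (k*d).
Proof.
apply/matrixP => i j; rewrite !mxE.
by case: i => [[|[|//]] ?]; case: j => [[|[|//]] ?] /=.
Qed.

Lemma mk2_01 (R : ringType) (a b c d : R) : mk2 a b c d 0 1 = b.
Proof. by rewrite mxE. Qed.

Lemma invT0 (R : realType) (E : R) :
  invmx (Tmat E 0) = mk2 1 E (-E) (1 - E^+2).
Proof.
have h : Tmat E 0 *m mk2 1 E (-E) (1 - E^+2) = 1%:M.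
  rewrite Tmk2 mk2_mul one_mk2; congr mk2; ring.
have [u _] := mulmx1_unit h.
by rewrite -[RHS]mul1mx -(mulVmx u) -mulmxA h mulmx1.
Qed.

Lemma Adef (R : realType) (E : R) :
  invmx (Tmat E 0) *m Tmat E 1 = mk2 (2 + E) 1 (1 - E - E^+2) (1 - E).
Proof. rewrite invT0 Tmk2 mk2_mul; congr mk2; ring. Qed.

Lemma entry_le (R : realType) (M : 'M[R]_2) (i j : 'I_2) : `|M i j| <= `|M|.
Proof.
rewrite [leRHS]/Num.Def.normr /= mx_normrE.
exact: (le_bigmax _ (fun ij : 'I_2 * 'I_2 => `|M ij.1 ij.2|) (i, j)).
Qed.

Definition pw (R : ringType) (A : 'M[R]_2) n := iter n (fun M => M *m A) 1%:M.

Lemma pw_rec (R : realType) (E : R) n :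
  let A := mk2 (2 + E) 1 (1 - E - E^+2) (1 - E) in
  pw A n.+2 = 3 *: pw A n.+1 - pw A n.
Proof.
move=> A.
have hA : A *m A = 3 *: A - 1%:M.
  rewrite /A mk2_mul mk2_scale one_mk2 mk2_sub; congr mk2; ring.
rewrite /pw /= -/(pw A n) -mulmxA hA mulmxBr mulmx1 scalemxAr //.
Qed.

Lemma pw_grow (R : realType) (E : R) n :
  let A := mk2 (2 + E) 1 (1 - E - E^+2) (1 - E) in
  n%:R <= pw A n 0 1 /\ pw A n 0 1 + 1 <= pw A n.+1 0 1.
Proof.
move=> A.
elim: n => [|n [IH1 IH2]].
  rewrite /pw /= mul1mx /A !mxE /=; lra.
split.
  rewrite -natr1; lra.
have -> : pw A n.+2 0 1 = 3 * pw A n.+1 0 1 - pw A n 0 1.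
  rewrite (pw_rec E n) -/A.
  set P1 := pw A n.+1; set P0 := pw A n.
  by rewrite !mxE.
have h0 : 0 <= pw A n 0 1 by apply: le_trans IH1.
lra.
Qed.

Lemma noncompact (R : realType) (S : set 'M[R]_2) (f : nat -> 'M[R]_2) :
  (forall n, S (f n)) -> (forall n, n%:R <= f n 0 1) -> ~ compact S.
Proof.
move=> Sf fn /compact_bounded hb.
case: hb => M [Mr HM].
have HM' := HM (M + 1) ltac:(lra).
have [n hn] : exists n : nat, M + 1 < n%:R.
  exists (Num.truncn (M + 1)).+1; exact: truncnS_gt.
have := HM' _ (Sf n).
have := entry_le (f n) 0 1.
have := fn n.
move=> h1 h2 h3.
have : f n 0 1 <= `|f n 0 1| by exact: ler_norm.
rewrite /= in h3; lra.
Qed.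

Section pick.
Variables (R : realType) (p q E : R).
Let r a := (a + E) * p + q.

Lemma two_bad b u u' : p != 0 -> u != u' -> b * r u = p ^+ 2 -> b * r u' = p ^+ 2 -> False.
Proof.
move=> hp hu h1 h2.
have /eqP : b * (u - u') * p = 0 by rewrite /r in h1 h2; rewrite -(subrr (p ^+ 2)) -{1}h1 -h2 /r; ring.
rewrite !mulf_eq0 subr_eq0 (negbTE hu) (negbTE hp) orbF orbF => /eqP hb.
move: h1; rewrite hb mul0r => /esym /eqP; rewrite expf_eq0 /= (negbTE hp) //.
Qed.

Lemma step2 w1 w2 : p != 0 ->
  exists u, (u = 1/4 \/ u = 3/4 \/ u = 1/8) /\ r w1 * r u != p ^+ 2 /\ r w2 * r u != p ^+ 2.
Proof.
move=> hp.
have d12 : (1/4 : R) != 3/4 by apply/eqP => h; lra.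
have d13 : (1/4 : R) != 1/8 by apply/eqP => h; lra.
have d23 : (3/4 : R) != 1/8 by apply/eqP => h; lra.
have [g1|] := boolP ((r w1 * r (1/4) != p^+2) && (r w2 * r (1/4) != p^+2)).
  by case/andP: g1 => ? ?; exists (1/4); split; [left|].
rewrite negb_and !negbK => /orP h1.
have [g2|] := boolP ((r w1 * r (3/4) != p^+2) && (r w2 * r (3/4) != p^+2)).
  by case/andP: g2 => ? ?; exists (3/4); split; [right; left|].
rewrite negb_and !negbK => /orP h2.
have [g3|] := boolP ((r w1 * r (1/8) != p^+2) && (r w2 * r (1/8) != p^+2)).
  by case/andP: g3 => ? ?; exists (1/8); split; [right; right|].
rewrite negb_and !negbK => /orP h3.
exfalso.
case: h1 => /eqP h1; case: h2 => /eqP h2; case: h3 => /eqP h3;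
  first [ exact: (two_bad hp d12 h1 h2) | exact: (two_bad hp d13 h1 h3)
        | exact: (two_bad hp d23 h2 h3) ].
Qed.

Lemma step1 : p != 0 -> exists w, (w = 1 \/ w = 1/2) /\ r 0 * r w != p ^+ 2.
Proof.
move=> hp.
have [g|/negPn/eqP h] := boolP (r 0 * r 1 != p ^+ 2); first by exists 1; split; [left|].
exists (1/2); split; [right|] => //; apply/negP => /eqP h'.
have d : (1 : R) != 1/2 by apply/eqP => e; lra.
exact: (two_bad hp d h h').
Qed.
End pick.

Lemma not_same (R : realType) (u v : 'cV[R]_2) :
  u 0 0 * v 1 0 - u 1 0 * v 0 0 != 0 -> ~ same_direction u v.
Proof.
move=> h [c [_ e]]; move: h; rewrite e !mxE.
have -> : c * v 0 0 * v 1 0 - c * v 1 0 * v 0 0 = 0 by ring.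
by rewrite eqxx.
Qed.

Lemma Tx0 (R : realType) (E a : R) (x : 'cV[R]_2) :
  (Tmat E a *m x) 0 0 = ((a - E) * (a + E) + 1) * x 0 0 + (a - E) * x 1 0.
Proof.
rewrite mxE !big_ord_recl big_ord0 addr0 !mxE /=.
by congr (_ * x _ _ + _ * x _ _); apply: val_inj.
Qed.

Lemma Tx1 (R : realType) (E a : R) (x : 'cV[R]_2) :
  (Tmat E a *m x) 1 0 = (a + E) * x 0 0 + x 1 0.
Proof.
rewrite mxE !big_ord_recl big_ord0 addr0 !mxE /= mul1r.
by congr (_ * x _ _ + x _ _); apply: val_inj.
Qed.

Lemma pairok (R : realType) (E a b : R) (x : 'cV[R]_2) :
  a != b ->
  ((a + E) * x 0 0 + x 1 0) * ((b + E) * x 0 0 + x 1 0) != x 0 0 ^+ 2 ->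
  ~ same_direction (Tmat E a *m x) (Tmat E b *m x).
Proof.
move=> hab hn; apply: not_same.
have -> : (Tmat E a *m x) 0 0 * (Tmat E b *m x) 1 0 -
          (Tmat E a *m x) 1 0 * (Tmat E b *m x) 0 0 =
   (b - a) * (x 0 0 ^+ 2 - ((a + E) * x 0 0 + x 1 0) * ((b + E) * x 0 0 + x 1 0)).
  rewrite !Tx0 !Tx1; ring.
rewrite mulf_neq0 //.
  by rewrite subr_eq0 eq_sym.
by rewrite subr_eq0 eq_sym.
Qed.

Theorem mainTheorem15 (R : realType) (mu : probability (measurableTypeR R) R)
  (E : R) :
  support_R mu = [set x : R | 0 <= x <= 1] ->
  -3 <= E <= 3 ->
  let G := gen_closed_subgroup (support_law mu (Tmat E)) in
  ~ compact G /\
  (forall x : 'cV[R]_2, x != 0 ->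
     exists g1 g2 g3, [/\ G g1, G g2 & G g3] /\
       [/\ ~ same_direction (g1 *m x) (g2 *m x),
           ~ same_direction (g1 *m x) (g3 *m x) &
           ~ same_direction (g2 *m x) (g3 *m x)]).
Proof.
move=> hs hE G.
have GT' w : 0 <= w <= 1 -> G (Tmat E w) by move=> hw; exact: GT.
clear hs.
split.
  set A := mk2 (2 + E) 1 (1 - E - E^+2) (1 - E).
  have GA : G A.
    rewrite /A -Adef; apply: Gmul; first apply: Ginv; apply: GT'; lra.
  apply: (@noncompact _ _ (pw A)).
    elim => [|n IH]; first exact: G1.
    exact: Gmul.
  by move=> n; have [] := pw_grow E n.
move=> x hx.
set p : R := x 0 0; set q : R := x 1 0.
have [p0|hp] := eqVneq p 0.
  have hq : q != 0.
    apply/negP => /eqP q0; move/negP: hx; apply; apply/eqP/matrixP => i j.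
    rewrite mxE; case: j => [[|//] ?].
    case: i => [[|[|//]] ?] /=.
      by rewrite -p0 /p; congr (x _ _); exact: val_inj.
    by rewrite -q0 /q; congr (x _ _); exact: val_inj.
  have ok (a b : R) : a != b -> ~ same_direction (Tmat E a *m x) (Tmat E b *m x).
    move=> hab; apply: pairok => //; rewrite -/p -/q p0 !mulr0 !add0r expr0n /=.
    exact: mulf_neq0.
  exists (Tmat E 0), (Tmat E (1/2 : R)), (Tmat E 1); split.
    split; apply: GT'; lra.
  split; apply: ok; apply/eqP => h; lra.
have [w [hw1 hw2]] := step1 q E hp.
have [u [hu1 [hu2 hu3]]] := step2 q E 0 w hp.
exists (Tmat E 0), (Tmat E w), (Tmat E u); split.
  split; apply: GT'; lra.
split; apply: pairok => //; try (apply/eqP => h; lra).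
Qed.
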